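(* For every positive integer $q$ divisible by $3$, there exists a $q$-solvable undirected graph on $4q/3$ vertices with clique number $2q/3$.
   Context: A directed graph $D=(V,E)$ has arcs $E \subseteq \{(u,v)\in V^2 : u \neq v\}$; an undirected graph is identified with the directed graph having both arcs $(u,v)$ and $(v,u)$ for each edge. $N^-(v)=\{u:(u,v)\in E\}$. For $q\ge2$ let $[q]=\{0,\dots,q-1\}$. A $D$-function over $[q]$ is a map $f=(f_v)_{v\in V}:[q]^V\to[q]^V$ with each $f_v(x)$ depending only on $(x_u)_{u\in N^-(v)}$. $D$ is $q$-solvable if some $D$-function $f$ over $[q]$ has the property that for every $x\in[q]^V$ there is $v$ with $f_v(x)=x_v$. The clique number of an undirected graph is the size of its largest complete subgraph. *)

(* Defs.v *)
From mathcomp Require Import all_boot.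
Set Implicit Arguments. Unset Strict Implicit. Unset Printing Implicit Defensive.

(* A directed graph on a finite vertex type V is a relation e : rel V,
   with e u v meaning the arc (u,v); arcs are loopless. *)
Definition loopless (V : finType) (e : rel V) : Prop := irreflexive e.

Definition undirected_graph (V : finType) (e : rel V) : Prop :=
  irreflexive e /\ symmetric e.

Definition D_function (V : finType) (e : rel V) (q : nat)
  (f : (V -> 'I_q) -> (V -> 'I_q)) : Prop :=
  forall (v : V) (x y : V -> 'I_q),
    (forall u, e u v -> x u = y u) -> f x v = f y v.

Definition q_solvable (V : finType) (e : rel V) (q : nat) : Prop :=
  exists f : (V -> 'I_q) -> (V -> 'I_q),
    D_function e f /\ forall x : V -> 'I_q, exists v : V, f x v = x v.

Definition is_clique (V : finType) (e : rel V) (S : {set V}) : bool :=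
  [forall x in S, forall y in S, (x != y) ==> e x y].

Definition clique_number (V : finType) (e : rel V) : nat :=
  \max_(S : {set V} | is_clique e S) #|S|.

(* Main.v *)
Require Import Defs.
From mathcomp Require Import all_boot.
From mathcomp Require Import zify.

Definition gtab (i : nat) : seq nat :=
  match i with
  | 0 => [:: 1;0;2;2;1;0;0;2;1]
  | 1 => [:: 2;0;1;0;1;2;1;2;0]
  | 2 => [:: 0;2;1;2;1;0;1;0;2]
  | _ => [:: 1;0;2;2;1;0;0;2;1]
  end.
Definition g i l r := nth 0 (gtab i) (3 * l + r).

Lemma c4 y0 y1 y2 y3 : y0 < 3 -> y1 < 3 -> y2 < 3 -> y3 < 3 ->
  [|| g 0 y3 y1 == y0, g 1 y0 y2 == y1, g 2 y1 y3 == y2 | g 3 y2 y0 == y3].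
Proof.
case: y0 => [|[|[|y0]]] //; case: y1 => [|[|[|y1]]] //;
case: y2 => [|[|[|y2]]] //; case: y3 => [|[|[|y3]]] //.
Qed.

Definition ed k n : rel 'I_n := fun u v =>
  (u != v) && (odd (u %/ k + v %/ k) || (u %/ k == v %/ k)).

Definition bsum k n m (x : 'I_n -> 'I_m) B :=
  (\sum_(u : 'I_n | u %/ k == B) (x u : nat)) %% m.
Definition Yv k n m x B := bsum k n m x B %/ k.
Definition rsum k n m (x : 'I_n -> 'I_m) (v : 'I_n) :=
  \sum_(u : 'I_n | (u %/ k == v %/ k) && (u != v)) (x u : nat).
Definition tg k n m x (v : 'I_n) :=
  g (v %/ k) (Yv k n m x ((v %/ k + 3) %% 4)) (Yv k n m x ((v %/ k + 1) %% 4)).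
Definition strat k n m (Hm : 0 < m) (x : 'I_n -> 'I_m) (v : 'I_n) : 'I_m :=
  Ordinal (ltn_pmod (tg k n m x v * k + v %% k + (m - rsum k n m x v %% m)) Hm).

Arguments ed k {n}.
Arguments bsum k {n m}.
Arguments Yv k {n m}.
Arguments rsum k {n m}.
Arguments tg k {n m}.
Arguments strat k {n m}.

Lemma ed_nb k n (u v : 'I_n) : odd (u %/ k + v %/ k) -> ed k u v.
Proof.
rewrite /ed => h; rewrite h orTb andbT; apply/eqP => e; subst.
by rewrite addnn odd_double in h.
Qed.

Lemma nb3 b : b < 4 -> odd ((b + 3) %% 4 + b).
Proof. by case: b => [|[|[|[|b]]]]. Qed.
Lemma nb1 b : b < 4 -> odd ((b + 1) %% 4 + b).
Proof. by case: b => [|[|[|[|b]]]]. Qed.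

Lemma arith m a r : a < m -> ((a + r) %% m + (m - r %% m)) %% m = a.
Proof.
move=> ha.
rewrite modnDml.
have hr := ltn_pmod r (leq_ltn_trans (leq0n a) ha).
have -> : a + r + (m - r %% m) = (r %/ m).+1 * m + a.
  rewrite {1}(divn_eq r m) mulSn; lia.
by rewrite modnMDl modn_small.
Qed.

Lemma win_blob k (hk : 0 < k) (x : 'I_(4 * k) -> 'I_(k * 3)) (Hm : 0 < k * 3) B :
  B < 4 ->
  g B (Yv k x ((B + 3) %% 4)) (Yv k x ((B + 1) %% 4)) = Yv k x B ->
  exists v, strat k Hm x v = x v.
Proof.
move=> hB hg.
set j := bsum k x B %% k.
have hj : j < k by rewrite ltn_pmod.
have hv : B * k + j < 4 * k by nia.
pose v := Ordinal hv.
have hvk : v %/ k = B by rewrite /= divnMDl // divn_small // addn0.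
have hvm : v %% k = j by rewrite /= modnMDl modn_small.
have E : Yv k x B * k + j = bsum k x B by rewrite /Yv /j -divn_eq.
exists v; apply: val_inj => /=.
rewrite /tg hvk hvm hg E /bsum /rsum.
rewrite (bigD1 v) /=; last by rewrite hvk.
rewrite hvk.
exact: arith.
Qed.

Theorem corollary6 (q : nat) :
  0 < q -> 3 %| q ->
  exists e : rel 'I_(4 * q %/ 3),
    undirected_graph e /\ q_solvable e q /\ clique_number e = 2 * q %/ 3.
Proof.
move=> hq /dvdnP [k hqk]; subst q.
have hk : 0 < k by lia.
have -> : 4 * (k * 3) %/ 3 = 4 * k by rewrite mulnA mulnK.
have -> : 2 * (k * 3) %/ 3 = 2 * k by rewrite mulnA mulnK.
exists (@ed k (4 * k)).
have hb : forall v : 'I_(4 * k), v %/ k < 4.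
  by move=> v; rewrite ltn_divLR.
split; [split|split].
- by move=> v; rewrite /ed eqxx.
- by move=> u v; rewrite /ed eq_sym addnC (eq_sym (u %/ k)).
- exists (strat k hq); split.
  + move=> v x y H; apply: val_inj => /=.
    have hr : rsum k x v = rsum k y v.
      apply: eq_bigr => u /andP [/eqP hu hne].
      by rewrite H // /ed hne hu eqxx orbT andbT.
    have hY : forall B, odd (B + v %/ k) -> Yv k x B = Yv k y B.
      move=> B hB; rewrite /Yv /bsum; congr ((_ %% _) %/ _).
      apply: eq_bigr => u /eqP hu; rewrite H //; apply: ed_nb; by rewrite hu.
    by rewrite hr /tg (hY _ (nb3 _ (hb v))) (hY _ (nb1 _ (hb v))).
  + move=> x.
    have hY : forall B, Yv k x B < 3.
      by move=> B; rewrite /Yv ltn_divLR // (mulnC 3 k) ltn_pmod.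
    case/or4P: (c4 _ _ _ _ (hY 0) (hY 1) (hY 2) (hY 3)) => /eqP h.
    * exact: (@win_blob k hk x hq 0).
    * exact: (@win_blob k hk x hq 1).
    * exact: (@win_blob k hk x hq 2).
    * exact: (@win_blob k hk x hq 3).
- apply/eqP; rewrite /clique_number eqn_leq; apply/andP; split.
  + apply/bigmax_leqP => S /forallP hS.
    have hlt : forall v : 'I_(4 * k), v %% k + k * odd (v %/ k) < 2 * k.
      move=> v; have := ltn_pmod v hk; case: (odd _) => /=; lia.
    pose h (v : 'I_(4 * k)) : 'I_(2 * k) := Ordinal (hlt v).
    rewrite -(card_in_imset (f := h)); first by apply: leq_trans (max_card _) _; rewrite card_ord.
    move=> u v hu hv /(congr1 val) /= => e.
    have h1 := ltn_pmod u hk; have h2 := ltn_pmod v hk.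
    have em : (u %% k = v %% k) /\ (odd (u %/ k) = odd (v %/ k)).
      move: e; case: (odd (u %/ k)); case: (odd (v %/ k)) => /= e; lia.
    case: em => em eo.
    case: (eqVneq u v) => // huv.
    move: hS => /(_ u) /implyP /(_ hu) /forallP /(_ v) /implyP /(_ hv) /implyP /(_ huv).
    rewrite /ed huv /= oddD eo addbb /= => /eqP eb.
    by apply: val_inj; rewrite /= (divn_eq u k) (divn_eq v k) eb em.
  + have hw : 2 * k <= 4 * k by lia.
    pose S0 := [set widen_ord hw i | i in [set: 'I_(2 * k)]].
    have -> : 2 * k = #|S0|.
      rewrite card_imset ?cardsT ?card_ord // => a b /(congr1 val) /= e; exact: val_inj.
    apply: (@leq_bigmax_cond _ (fun S : {set 'I_(4 * k)} => is_clique (ed k) S) (fun S => #|S|) S0).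
    apply/forallP => a; apply/implyP => /imsetP [a' _ ->].
    apply/forallP => b; apply/implyP => /imsetP [b' _ ->].
    apply/implyP => hne; rewrite /ed hne /=.
    have ha := ltn_ord a'; have hb' := ltn_ord b'.
    have : a' %/ k < 2 by rewrite ltn_divLR.
    have : b' %/ k < 2 by rewrite ltn_divLR.
    by case: (a' %/ k) => [|[|]] //; case: (b' %/ k) => [|[|]].
Qed.
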